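(* Let $N,G,H$ be finitely generated groups. If $G$ and $H$ are biLipschitz equivalent, then $N\wr G$ and $N\wr H$ are biLipschitz equivalent.
   Context: Groups carry word metrics from finite generating sets. $N\wr G=\bigl(\bigoplus_G N\bigr)\rtimes G$ with $G$ acting by left translation of coordinates, with the word metric for the standard generating set (lamp generators at the identity and generators of $G$). A biLipschitz equivalence is a bijection $f$ with $\frac1C d(x,y)\le d(f(x),f(y))\le Cd(x,y)$ for some $C\ge1$. *)

(* Defs.v *)
From Stdlib Require Import Reals List ClassicalDescription.
Import ListNotations.
Set Implicit Arguments.

Record group := Group {
  gcar :> Type;
  gmul : gcar -> gcar -> gcar;
  gone : gcar;
  ginv : gcar -> gcar;
  gmulA : forall x y z, gmul x (gmul y z) = gmul (gmul x y) z;
  gmul1l : forall x, gmul gone x = x;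
  gmul1r : forall x, gmul x gone = x;
  gmulVl : forall x, gmul (ginv x) x = gone;
  gmulVr : forall x, gmul x (ginv x) = gone
}.
Arguments gmul : clear implicits.
Arguments ginv : clear implicits.
Arguments gmulA : clear implicits.
Arguments gmul1l : clear implicits.
Arguments gmul1r : clear implicits.
Arguments gmulVl : clear implicits.
Arguments gmulVr : clear implicits.

Section WordMetric.
Variables (T : Type) (mul : T -> T -> T) (one : T) (inv : T -> T).

Definition is_word (S : list T) (w : list T) : Prop :=
  Forall (fun s => In s S \/ In (inv s) S) w.

Definition word_prod (w : list T) : T := fold_right mul one w.

Definition generates (S : list T) : Prop :=
  forall g, exists w, is_word S w /\ word_prod w = g.

Definition word_len (S : list T) (g : T) (n : nat) : Prop :=
  (exists w, is_word S w /\ word_prod w = g /\ length w = n) /\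
  (forall w, is_word S w -> word_prod w = g -> (n <= length w)%nat).

Definition wdist (S : list T) (x y : T) (n : nat) : Prop :=
  word_len S (mul (inv x) y) n.
End WordMetric.

Definition bijective {A B : Type} (f : A -> B) : Prop :=
  (forall x y, f x = f y -> x = y) /\ (forall z, exists x, f x = z).

Definition biLipschitz_equiv
  (T1 : Type) (mul1 : T1 -> T1 -> T1) (one1 : T1) (inv1 : T1 -> T1) (S1 : list T1)
  (T2 : Type) (mul2 : T2 -> T2 -> T2) (one2 : T2) (inv2 : T2 -> T2) (S2 : list T2) : Prop :=
  exists f : T1 -> T2, bijective f /\
    exists C : R, (1 <= C)%R /\
      forall x y n m, wdist mul1 one1 inv1 S1 x y n -> wdist mul2 one2 inv2 S2 (f x) (f y) m ->
        (INR n / C <= INR m <= C * INR n)%R.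

Definition group_biLipschitz (G H : group) (SG : list G) (SH : list H) : Prop :=
  biLipschitz_equiv (gmul G) (gone G) (ginv G) SG (gmul H) (gone H) (ginv H) SH.
Arguments group_biLipschitz : clear implicits.

Section Wreath.
Variables (N G : group).

Definition fin_supp (phi : G -> N) : Prop :=
  exists l : list G, forall x, ~ In x l -> phi x = gone N.

Definition lamp := { phi : G -> N | fin_supp phi }.

Lemma ginv1 (K : group) : ginv K (gone K) = gone K.
Proof. rewrite <- (gmul1l K (ginv K (gone K))). apply gmulVr. Qed.

Lemma fin_supp_mul (phi psi : G -> N) :
  fin_supp phi -> fin_supp psi -> fin_supp (fun x => gmul N (phi x) (psi x)).
Proof.
  intros [l1 H1] [l2 H2]. exists (l1 ++ l2). intros x Hx.
  rewrite H1, H2. apply (gmul1l N).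
  - intro; apply Hx, in_or_app; now right.
  - intro; apply Hx, in_or_app; now left.
Qed.

Lemma fin_supp_inv (phi : G -> N) :
  fin_supp phi -> fin_supp (fun x => ginv N (phi x)).
Proof. intros [l H1]. exists l. intros x Hx. rewrite H1 by exact Hx. apply ginv1. Qed.

Lemma fin_supp_shift (g : G) (psi : G -> N) :
  fin_supp psi -> fin_supp (fun x => psi (gmul G (ginv G g) x)).
Proof.
  intros [l H1]. exists (map (gmul G g) l). intros x Hx. apply H1. intro Hin.
  apply Hx. replace x with (gmul G g (gmul G (ginv G g) x)).
  - now apply in_map.
  - rewrite gmulA, gmulVr. apply (gmul1l G).
Qed.

Lemma fin_supp_one : fin_supp (fun _ => gone N).
Proof. exists nil. auto. Qed.

Lemma fin_supp_delta (s : N) :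
  fin_supp (fun x => if excluded_middle_informative (x = gone G) then s else gone N).
Proof.
  exists [gone G]. intros x Hx.
  destruct (excluded_middle_informative (x = gone G)) as [e|]; auto.
  exfalso; apply Hx; left; auto.
Qed.

Definition lmul (a b : lamp) : lamp :=
  exist _ _ (fin_supp_mul (proj2_sig a) (proj2_sig b)).
Definition linv (a : lamp) : lamp := exist _ _ (fin_supp_inv (proj2_sig a)).
Definition lshift (g : G) (a : lamp) : lamp := exist _ _ (fin_supp_shift g (proj2_sig a)).
Definition lone : lamp := exist _ _ fin_supp_one.
Definition ldelta (s : N) : lamp := exist _ _ (fin_supp_delta s).

Definition wreath : Type := (lamp * G)%type.
Definition wmul (u v : wreath) : wreath :=
  (lmul (fst u) (lshift (snd u) (fst v)), gmul G (snd u) (snd v)).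
Definition wone : wreath := (lone, gone G).
Definition winv (u : wreath) : wreath :=
  (lshift (ginv G (snd u)) (linv (fst u)), ginv G (snd u)).

Definition wreath_gens (SN : list N) (SG : list G) : list wreath :=
  map (fun s => (ldelta s, gone G)) SN ++ map (fun t => (lone, t)) SG.
End Wreath.
Arguments wmul : clear implicits.
Arguments winv : clear implicits.
Arguments wreath_gens : clear implicits.

(* Main.v *)
Require Import Defs.
From Stdlib Require Import Reals List Lia Lra.
From Stdlib Require Import FunctionalExtensionality ProofIrrelevance ClassicalEpsilon Classical.
Import ListNotations.

Section GL.
Variable K : group.
Lemma g_KV (x y : K) : gmul K (ginv K x) (gmul K x y) = y.
Proof. rewrite gmulA, gmulVl, gmul1l. reflexivity. Qed.
Lemma g_VK (x y : K) : gmul K x (gmul K (ginv K x) y) = y.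
Proof. rewrite gmulA, gmulVr, gmul1l. reflexivity. Qed.
Lemma g_invK (x : K) : ginv K (ginv K x) = x.
Proof.
  transitivity (gmul K (ginv K (ginv K x)) (gmul K (ginv K x) x)).
  - rewrite gmulVl, gmul1r. reflexivity.
  - apply g_KV.
Qed.
Lemma g_invM (x y : K) : ginv K (gmul K x y) = gmul K (ginv K y) (ginv K x).
Proof.
  rewrite <- (g_KV (gmul K x y) (gmul K (ginv K y) (ginv K x))).
  rewrite <- (gmulA K x y), (g_VK y), gmulVr, gmul1r. reflexivity.
Qed.
Lemma g_inv_eq1 (x y : K) : gmul K (ginv K x) y = gone K -> y = x.
Proof.
  intro E. rewrite <- (g_VK x y), E, gmul1r. reflexivity.
Qed.
Lemma g_inv1 : ginv K (gone K) = gone K.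
Proof. apply ginv1. Qed.
End GL.

Lemma lamp_ext (N G : group) (a b : lamp N G) :
  (forall x, proj1_sig a x = proj1_sig b x) -> a = b.
Proof.
  destruct a as [fa pa], b as [fb pb]; simpl; intro E.
  assert (fa = fb) by (apply functional_extensionality; exact E). subst.
  f_equal. apply proof_irrelevance.
Qed.

Section WG.
Variables N G : group.
Lemma wmulA (x y z : wreath N G) :
  wmul N G x (wmul N G y z) = wmul N G (wmul N G x y) z.
Proof.
  destruct x as [a g], y as [b h], z as [c k]. unfold wmul, wone, winv; simpl. f_equal.
  - apply lamp_ext; intro x; simpl. rewrite gmulA. f_equal. f_equal.
    rewrite g_invM, gmulA. reflexivity.
  - apply gmulA.
Qed.
Lemma wmul1l (x : wreath N G) : wmul N G (wone N G) x = x.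
Proof.
  destruct x as [a g]. unfold wmul, wone, winv; simpl. f_equal.
  - apply lamp_ext; intro x; simpl. rewrite gmul1l, g_inv1, gmul1l. reflexivity.
  - apply gmul1l.
Qed.
Lemma wmul1r (x : wreath N G) : wmul N G x (wone N G) = x.
Proof.
  destruct x as [a g]. unfold wmul, wone, winv; simpl. f_equal.
  - apply lamp_ext; intro x; simpl. rewrite gmul1r. reflexivity.
  - apply gmul1r.
Qed.
Lemma wmulVl (x : wreath N G) : wmul N G (winv N G x) x = wone N G.
Proof.
  destruct x as [a g]. unfold wmul, wone, winv; simpl. f_equal.
  - apply lamp_ext; intro x; simpl. rewrite g_invK. apply gmulVl.
  - apply gmulVl.
Qed.
Lemma wmulVr (x : wreath N G) : wmul N G x (winv N G x) = wone N G.
Proof.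
  destruct x as [a g]. unfold wmul, wone, winv; simpl. f_equal.
  - apply lamp_ext; intro x; simpl. rewrite g_invK, g_VK. apply gmulVr.
  - apply gmulVr.
Qed.
Definition WG : group := @Group (wreath N G) (wmul N G) (wone N G) (winv N G) wmulA wmul1l wmul1r wmulVl wmulVr.
End WG.

Lemma prod_app (A : group) (w1 w2 : list A) :
  word_prod (gmul A) (gone A) (w1 ++ w2) =
  gmul A (word_prod (gmul A) (gone A) w1) (word_prod (gmul A) (gone A) w2).
Proof.
  induction w1; simpl. - rewrite gmul1l; reflexivity.
  - rewrite IHw1, gmulA. reflexivity.
Qed.

Lemma chain (A B : group) (SA : list A) (SB : list B) (F : A -> B) (K : nat) :
  (forall u a, (In a SA \/ In (ginv A a) SA) -> exists w, is_word (ginv B) SB w /\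
      (length w <= K)%nat /\ gmul B (F u) (word_prod (gmul B) (gone B) w) = F (gmul A u a)) ->
  forall x y n m, wdist (gmul A) (gone A) (ginv A) SA x y n ->
     wdist (gmul B) (gone B) (ginv B) SB (F x) (F y) m -> (m <= K * n)%nat.
Proof.
  intros Hs.
  assert (Hw : forall w x, is_word (ginv A) SA w -> exists w', is_word (ginv B) SB w' /\
      (length w' <= K * length w)%nat /\
      gmul B (F x) (word_prod (gmul B) (gone B) w') = F (gmul A x (word_prod (gmul A) (gone A) w))).
  { induction w as [|a w IH]; intros x Hiw.
    - exists nil. simpl. split; [constructor|]. split; [lia|]. rewrite !gmul1r. reflexivity.
    - inversion Hiw; subst. destruct (Hs x a H1) as [w1 [H1w [H1l H1e]]].
      destruct (IH (gmul A x a) H2) as [w2 [H2w [H2l H2e]]].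
      exists (w1 ++ w2). split; [apply Forall_app; auto|]. split.
      + rewrite length_app; simpl. nia.
      + rewrite prod_app, gmulA, H1e, H2e. simpl. rewrite gmulA. reflexivity. }
  intros x y n m [[w [Hiw [Hp Hl]]] _] [_ Hmin].
  destruct (Hw w x Hiw) as [w' [H1 [H2 H3]]].
  assert (E : word_prod (gmul B) (gone B) w' = gmul B (ginv B (F x)) (F y)).
  { rewrite Hp, g_VK in H3. rewrite <- H3, g_KV. reflexivity. }
  specialize (Hmin w' H1 E). subst. lia.
Qed.

Lemma word_len_ex (A : group) (S : list A) :
  generates (gmul A) (gone A) (ginv A) S -> forall g, exists n, word_len (gmul A) (gone A) (ginv A) S g n.
Proof.
  intros Hg g. apply NNPP; intro Hno.
  assert (Hall : forall k, forall w, is_word (ginv A) S w -> word_prod (gmul A) (gone A) w = g -> length w <> k).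
  { intro k. induction k as [k IH] using (well_founded_induction Wf_nat.lt_wf).
    intros w Hw Hp Hl. apply Hno. exists k. split.
    - exists w. auto.
    - intros w' Hw' Hp'. destruct (Compare_dec.le_lt_dec k (length w')) as [h|h]; auto.
      exfalso. exact (IH _ h w' Hw' Hp' eq_refl). }
  destruct (Hg g) as [w [Hw Hp]]. exact (Hall _ w Hw Hp eq_refl).
Qed.

Section Map.
Variables (N G H : group) (f : G -> H) (fi : H -> G).
Hypothesis fK : forall x, fi (f x) = x.
Hypothesis fiK : forall y, f (fi y) = y.

Lemma fin_supp_comp (phi : G -> N) : fin_supp N G phi -> fin_supp N H (fun x => phi (fi x)).
Proof.
  intros [l Hl]. exists (map f l). intros x Hx. apply Hl. intro Hin. apply Hx.
  rewrite <- (fiK x). apply in_map. exact Hin.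
Qed.

Definition lcomp (a : lamp N G) : lamp N H := exist _ _ (fin_supp_comp (proj1_sig a) (proj2_sig a)).
Definition Fm (u : wreath N G) : wreath N H := (lcomp (fst u), f (snd u)).

Lemma FmA (u : wreath N G) (s : N) :
  Fm (wmul N G u (ldelta N G s, gone G)) = wmul N H (Fm u) (ldelta N H s, gone H).
Proof.
  destruct u as [a g]. unfold Fm, wmul; simpl. f_equal.
  - apply lamp_ext; intro x; simpl. f_equal.
    destruct (ClassicalDescription.excluded_middle_informative (gmul G (ginv G g) (fi x) = gone G)) as [e1|n1];
    destruct (ClassicalDescription.excluded_middle_informative (gmul H (ginv H (f g)) x = gone H)) as [e2|n2]; auto.
    + exfalso. apply n2. apply g_inv_eq1 in e1. subst g. rewrite fiK. apply gmulVl.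
    + exfalso. apply n1. apply g_inv_eq1 in e2. subst x. rewrite fK. apply gmulVl.
  - rewrite !gmul1r. reflexivity.
Qed.

Lemma FmB (u : wreath N G) (t : G) (h : H) :
  gmul H (f (snd u)) h = f (gmul G (snd u) t) ->
  Fm (wmul N G u (lone N G, t)) = wmul N H (Fm u) (lone N H, h).
Proof.
  destruct u as [a g]. simpl. intro E. unfold Fm, wmul; simpl. f_equal.
  - apply lamp_ext; intro x; simpl. reflexivity.
  - symmetry; exact E.
Qed.

End Map.

Lemma prod_move (N H : group) (w : list H) :
  word_prod (wmul N H) (wone N H) (map (fun t => (lone N H, t)) w) = (lone N H, word_prod (gmul H) (gone H) w).
Proof.
  induction w as [|t w IH]; simpl. - reflexivity.
  - rewrite IH. unfold wmul; simpl. f_equal. apply lamp_ext; intro x; simpl. apply gmul1l.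
Qed.

Lemma Fm_inv (N G H : group) f fi (fK : forall x, fi (f x) = x) (fiK : forall y, f (fi y) = y) u :
  Fm N H G fi f fK (Fm N G H f fi fiK u) = u.
Proof.
  destruct u as [a g]. unfold Fm; simpl. f_equal.
  - apply lamp_ext; intro x; simpl. rewrite fK. reflexivity.
  - apply fK.
Qed.

Lemma winv_move (N G : group) (t : G) : winv N G (lone N G, t) = (lone N G, ginv G t).
Proof.
  unfold winv; simpl. f_equal. apply lamp_ext; intro x; simpl. apply ginv1.
Qed.

Lemma step (N G H : group) (SN : list N) (SG : list G) (SH : list H) f fi
  (fK : forall x, fi (f x) = x) (fiK : forall y, f (fi y) = y) (K : nat) (HK : (1 <= K)%nat)
  (Hmove : forall g t, (In t SG \/ In (ginv G t) SG) -> exists w, is_word (ginv H) SH w /\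
      (length w <= K)%nat /\ gmul H (f g) (word_prod (gmul H) (gone H) w) = f (gmul G g t)) :
  forall u a, In a (wreath_gens N G SN SG) \/ In (winv N G a) (wreath_gens N G SN SG) ->
  exists w, is_word (winv N H) (wreath_gens N H SN SH) w /\ (length w <= K)%nat /\
   wmul N H (Fm N G H f fi fiK u) (word_prod (wmul N H) (wone N H) w) = Fm N G H f fi fiK (wmul N G u a).
Proof.
  assert (Mv : forall u t, (In t SG \/ In (ginv G t) SG) ->
    exists w, is_word (winv N H) (wreath_gens N H SN SH) w /\ (length w <= K)%nat /\
    wmul N H (Fm N G H f fi fiK u) (word_prod (wmul N H) (wone N H) w) = Fm N G H f fi fiK (wmul N G u (lone N G, t))).
  { intros u t Ht. destruct (Hmove (snd u) t Ht) as [w [Hw [Hl He]]].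
    exists (map (fun t => (lone N H, t)) w). split; [|split].
    - unfold is_word in *. rewrite Forall_forall in *. intros x Hx.
      apply in_map_iff in Hx. destruct Hx as [h [<- Hh]]. destruct (Hw h Hh) as [Hh'|Hh'].
      + left. unfold wreath_gens. apply in_or_app. right. apply (in_map (fun t => (lone N H, t))). exact Hh'.
      + right. rewrite winv_move. unfold wreath_gens. apply in_or_app. right.
        apply (in_map (fun t => (lone N H, t))). exact Hh'.
    - rewrite length_map. exact Hl.
    - rewrite prod_move. symmetry. apply FmB. exact He. }
  assert (Lp : forall u s, In s SN ->
    exists w, is_word (winv N H) (wreath_gens N H SN SH) w /\ (length w <= K)%nat /\
    wmul N H (Fm N G H f fi fiK u) (word_prod (wmul N H) (wone N H) w) = Fm N G H f fi fiK (wmul N G u (ldelta N G s, gone G))).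
  { intros u s Hs. exists [(ldelta N H s, gone H)]. split; [|split].
    - constructor; [|constructor]. left. unfold wreath_gens. apply in_or_app. left.
      apply (in_map (fun s => (ldelta N H s, gone H))). exact Hs.
    - simpl; lia.
    - simpl. rewrite wmul1r. symmetry. apply FmA. exact fK. }
  assert (Lpi : forall u s, In s SN ->
    exists w, is_word (winv N H) (wreath_gens N H SN SH) w /\ (length w <= K)%nat /\
    wmul N H (Fm N G H f fi fiK u) (word_prod (wmul N H) (wone N H) w) = Fm N G H f fi fiK (wmul N G u (winv N G (ldelta N G s, gone G)))).
  { intros u s Hs. exists [winv N H (ldelta N H s, gone H)]. split; [|split].
    - constructor; [|constructor]. right.
      assert (E : winv N H (winv N H (ldelta N H s, gone H)) = (ldelta N H s, gone H)) by exact (g_invK (WG N H) _).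
      rewrite E. unfold wreath_gens. apply in_or_app. left.
      apply (in_map (fun s => (ldelta N H s, gone H))). exact Hs.
    - simpl; lia.
    - simpl. rewrite wmul1r.
      set (v := wmul N G u (winv N G (ldelta N G s, gone G))).
      assert (Ev : u = wmul N G v (ldelta N G s, gone G)).
      { unfold v. rewrite <- wmulA, wmulVl, wmul1r. reflexivity. }
      rewrite Ev at 1. rewrite (FmA N G H f fi fK fiK). rewrite <- wmulA, wmulVr, wmul1r. reflexivity. }
  intros u a [Ha|Ha]; unfold wreath_gens in Ha; apply in_app_or in Ha;
    destruct Ha as [Ha|Ha]; apply in_map_iff in Ha; destruct Ha as [z [Ez Hz]].
  - subst a. apply Lp. exact Hz.
  - subst a. apply Mv. left. exact Hz.
  - assert (Ea : a = winv N G (ldelta N G z, gone G)).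
    { rewrite Ez. symmetry. exact (g_invK (WG N G) a). }
    subst a. apply Lpi. exact Hz.
  - assert (Ea : a = winv N G (lone N G, z)).
    { rewrite Ez. symmetry. exact (g_invK (WG N G) a). }
    rewrite winv_move in Ea. subst a. apply Mv. right. rewrite g_invK. exact Hz.
Qed.

Lemma move_bound (A B : group) (SA : list A) (SB : list B) (h : A -> B) (C : R) (K1 : nat)
  (HC : (1 <= C)%R) (HK : (C <= INR K1)%R)
  (HA : generates (gmul A) (gone A) (ginv A) SA) (HB : generates (gmul B) (gone B) (ginv B) SB)
  (Hb : forall x y n m, wdist (gmul A) (gone A) (ginv A) SA x y n ->
        wdist (gmul B) (gone B) (ginv B) SB (h x) (h y) m -> (INR m <= C * INR n)%R) :
  forall g t, (In t SA \/ In (ginv A t) SA) -> exists w, is_word (ginv B) SB w /\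
      (length w <= K1)%nat /\ gmul B (h g) (word_prod (gmul B) (gone B) w) = h (gmul A g t).
Proof.
  intros g t Ht.
  destruct (word_len_ex A SA HA (gmul A (ginv A g) (gmul A g t))) as [n Hn].
  assert (Hn1 : (n <= 1)%nat).
  { destruct Hn as [_ Hmin]. apply (Hmin [t]).
    - constructor; [exact Ht|constructor].
    - simpl. rewrite gmul1r, g_KV. reflexivity. }
  destruct (word_len_ex B SB HB (gmul B (ginv B (h g)) (h (gmul A g t)))) as [m Hm].
  pose proof (Hb g (gmul A g t) n m Hn Hm) as Hr.
  assert (INR n <= 1)%R by (apply le_INR in Hn1; simpl in Hn1; lra).
  assert (Hm1 : (m <= K1)%nat) by (apply INR_le; nra).
  destruct Hm as [[w [Hw [Hp Hl]]] _]. exists w. split; [exact Hw|split; [lia|]].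
  rewrite Hp, g_VK. reflexivity.
Qed.

Theorem lemma5p3 (N G H : group) (SN : list N) (SG : list G) (SH : list H) :
  generates (gmul N) (gone N) (ginv N) SN ->
  generates (gmul G) (gone G) (ginv G) SG ->
  generates (gmul H) (gone H) (ginv H) SH ->
  group_biLipschitz G H SG SH ->
  biLipschitz_equiv (wmul N G) (wone N G) (winv N G) (wreath_gens N G SN SG)
                    (wmul N H) (wone N H) (winv N H) (wreath_gens N H SN SH).
Proof.
  intros _ HG HH [f [[Hinj Hsurj] [C [HC Hbl]]]].
  pose (fi := fun y => proj1_sig (constructive_indefinite_description _ (Hsurj y))).
  assert (fiK : forall y, f (fi y) = y) by (intro y; exact (proj2_sig (constructive_indefinite_description _ (Hsurj y)))).
  assert (fK : forall x, fi (f x) = x) by (intro x; apply Hinj; apply fiK).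
  destruct (INR_unbounded C) as [K1 HK1].
  assert (M1 := move_bound G H SG SH f C K1 HC ltac:(lra) HG HH
    (fun x y n m Hn Hm => proj2 (Hbl x y n m Hn Hm))).
  assert (M2 : forall g t, (In t SH \/ In (ginv H t) SH) -> exists w, is_word (ginv G) SG w /\
      (length w <= K1)%nat /\ gmul G (fi g) (word_prod (gmul G) (gone G) w) = fi (gmul H g t)).
  { apply (move_bound H G SH SG fi C K1 HC ltac:(lra) HH HG).
    intros x y n m Hn Hm. rewrite <- (fiK x), <- (fiK y) in Hn.
    pose proof (proj1 (Hbl _ _ _ _ Hm Hn)) as Hr.
    assert (0 < C)%R by lra.
    unfold Rdiv in Hr. apply (Rmult_le_compat_r C) in Hr; [|lra].
    rewrite Rmult_assoc, Rinv_l in Hr by lra. lra. }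
  set (K := Nat.max 1 K1).
  assert (M1' : forall g t, (In t SG \/ In (ginv G t) SG) -> exists w, is_word (ginv H) SH w /\
      (length w <= K)%nat /\ gmul H (f g) (word_prod (gmul H) (gone H) w) = f (gmul G g t)).
  { intros g t Ht. destruct (M1 g t Ht) as [w [A1 [A2 A3]]]. exists w. split; [|split]; auto. lia. }
  assert (M2' : forall g t, (In t SH \/ In (ginv H t) SH) -> exists w, is_word (ginv G) SG w /\
      (length w <= K)%nat /\ gmul G (fi g) (word_prod (gmul G) (gone G) w) = fi (gmul H g t)).
  { intros g t Ht. destruct (M2 g t Ht) as [w [A1 [A2 A3]]]. exists w. split; [|split]; auto. lia. }
  assert (HK : (1 <= K)%nat) by lia.
  pose proof (step N G H SN SG SH f fi fK fiK K HK M1') as S1.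
  pose proof (step N H G SN SH SG fi f fiK fK K HK M2') as S2.
  pose proof (chain (WG N G) (WG N H) (wreath_gens N G SN SG) (wreath_gens N H SN SH) (Fm N G H f fi fiK) K S1) as C1.
  pose proof (chain (WG N H) (WG N G) (wreath_gens N H SN SH) (wreath_gens N G SN SG) (Fm N H G fi f fK) K S2) as C2.
  exists (Fm N G H f fi fiK). split.
  - split.
    + intros x y E. rewrite <- (Fm_inv N G H f fi fK fiK x), <- (Fm_inv N G H f fi fK fiK y), E. reflexivity.
    + intro z. exists (Fm N H G fi f fK z). apply (Fm_inv N H G fi f fiK fK).
  - exists (INR K). split.
    + apply le_INR in HK. simpl in HK. exact HK.
    + intros x y n m Hn Hm.
      pose proof (C1 x y n m Hn Hm) as U.
      assert (Hn' := Hn). rewrite <- (Fm_inv N G H f fi fK fiK x), <- (Fm_inv N G H f fi fK fiK y) in Hn'.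
      pose proof (C2 _ _ m n Hm Hn') as L.
      apply le_INR in U, L. rewrite mult_INR in U, L.
      assert (1 <= INR K)%R by (apply le_INR in HK; simpl in HK; exact HK).
      split; [|exact U].
      unfold Rdiv. apply (Rmult_le_reg_r (INR K)); [lra|].
      rewrite Rmult_assoc, Rinv_l by lra. lra.
Qed.
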